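(* Let $n\geq 2$ and let $\mu_0^n$ be the complex commutative associative algebra with basis $\{e_1,\dots,e_n\}$ and multiplication $e_i\cdot e_j=e_{i+j}$ if $2\leq i+j\leq n$, all other products of basis elements being zero. Let $[-,-]$ be a bilinear operation on $\mu_0^n$ such that $(\mu_0^n,\cdot,[-,-])$ is a transposed Poisson algebra. Then there exist $\alpha_2,\dots,\alpha_n\in\mathbb{C}$ such that \[ [e_i,e_j]=(j-i)\sum_{t=i+j-1}^{n}\alpha_{t-i-j+3}\,e_t\quad\text{for } 3\leq i+j\leq n+1, \] and all other brackets of basis elements are zero. (This algebra is denoted $\mathbf{TP}(\alpha_2,\dots,\alpha_n)$.)
   Context: A transposed Poisson algebra is a triple $(\mathfrak{L},\cdot,[-,-])$ where $\mathfrak{L}$ is a complex vector space, $(\mathfrak{L},\cdot)$ is a commutative associative algebra, $(\mathfrak{L},[-,-])$ is a Lie algebra, and $2z\cdot[x,y]=[z\cdot x,y]+[x,z\cdot y]$ for all $x,y,z\in\mathfrak{L}$. *)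

(* Defs.v *)
From HB Require Import structures.
From mathcomp Require Import all_boot all_order all_algebra.
From mathcomp Require Import complex.
From mathcomp Require Import reals.
Set Implicit Arguments. Unset Strict Implicit. Unset Printing Implicit Defensive.
Import Order.TTheory GRing.Theory Num.Theory.
Local Open Scope ring_scope.

Definition CC (R : realType) := R[i].

(* The underlying vector space of mu_0^n: coordinate rows 'rV[C]_n,
   coordinate m (0-based) being the coefficient of e_(m+1). *)
Definition vecn (R : realType) (n : nat) := 'rV[CC R]_n.

(* Basis vector e_k (1-based); it is 0 when k = 0 or k > n. *)
Definition ebasis (R : realType) (n : nat) (k : nat) : vecn R n :=
  \row_(m < n) (if (m.+1 == k)%N then 1 else 0).

Definition mu0_mul (R : realType) (n : nat) (x y : vecn R n) : vecn R n :=
  \sum_(i < n) \sum_(j < n) ((x 0 i * y 0 j) *: ebasis R n (i.+1 + j.+1)).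

Definition is_TPA_bracket (R : realType) (n : nat)
    (br : vecn R n -> vecn R n -> vecn R n) : Prop :=
  [/\ (forall (a : CC R) x y z, br (a *: x + y) z = a *: br x z + br y z),
      (forall (a : CC R) x y z, br z (a *: x + y) = a *: br z x + br z y),
      (forall x, br x x = 0),
      (forall x y z, br x (br y z) + br y (br z x) + br z (br x y) = 0)
    & (forall x y z, 2%:R *: mu0_mul z (br x y)
                    = br (mu0_mul z x) y + br x (mu0_mul z y)) ].

(* Main.v *)
Require Import Defs.
From HB Require Import structures.
From mathcomp Require Import all_boot all_order all_algebra.
From mathcomp Require Import complex reals.
From mathcomp Require Import zify ring.
Import Order.TTheory GRing.Theory Num.Theory.
Local Open Scope ring_scope.

Definition co {R : realType} {n : nat} (w : vecn R n) (a : nat) : CC R :=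
  if insub a is Some l then w 0 l else 0.

Lemma sum_ord_dirac (V : zmodType) (n : nat) (F : 'I_n -> V) (a : nat) :
  \sum_(i < n) (if val i == a then F i else 0) =
  if insub a is Some i then F i else 0.
Proof.
case: insubP => [i Ha <-|Ha].
  rewrite (bigD1 i) //= eqxx big1 ?addr0 // => j /negbTE.
  by rewrite val_eqE => ->.
apply: big1 => i _; case: eqP => // Hia.
by rewrite -Hia ltn_ord in Ha.
Qed.

Lemma sum_nat_dirac (V : zmodType) (lo hi b : nat) (g : nat -> V) :
  \sum_(lo <= t < hi) (if t == b then g t else 0) =
  if (lo <= b < hi)%N then g b else 0.
Proof.
elim: hi => [|hi IH].
  by rewrite big_geq // ltn0 andbF.
case: (leqP lo hi) => Hl.
  rewrite big_nat_recr //= IH.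
  case: (eqVneq hi b) => [<-|Hb].
    by rewrite ltnn andbF add0r Hl ltnSn.
  rewrite addr0; congr (if _ then _ else _).
  case: (lo <= b)%N => //=; by rewrite [(b < hi.+1)%N]ltnS ltn_neqAle eq_sym Hb.
rewrite big_geq //.
case: ifP => // /andP [H1 H2]; exfalso; simpl in *; lia.
Qed.

Lemma co_ord {R : realType} {n : nat} (w : vecn R n) (l : 'I_n) : co w l = w 0 l.
Proof. by rewrite /co valK. Qed.

Lemma co_out {R : realType} {n : nat} (w : vecn R n) (a : nat) : (n <= a)%N -> co w a = 0.
Proof. by move=> H; rewrite /co insubF // ltnNge H. Qed.

Lemma co_ext {R : realType} {n : nat} (x y : vecn R n) : (forall a, co x a = co y a) -> x = y.
Proof.
move=> H; apply/rowP => l; by rewrite -!co_ord H.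
Qed.

Lemma co0 {R : realType} {n : nat} a : co (0 : vecn R n) a = 0.
Proof. by rewrite /co; case: insub => // l; rewrite mxE. Qed.

Lemma coD {R : realType} {n : nat} (x y : vecn R n) a : co (x + y) a = co x a + co y a.
Proof. by rewrite /co; case: insub => [l|]; rewrite ?mxE ?addr0. Qed.

Lemma coZ {R : realType} {n : nat} c (x : vecn R n) a : co (c *: x) a = c * co x a.
Proof. by rewrite /co; case: insub => [l|]; rewrite ?mxE ?mulr0. Qed.

Lemma co_sum {R : realType} {n : nat} (I : Type) (r : seq I) (P : pred I) (F : I -> vecn R n) a :
  co (\sum_(i <- r | P i) F i) a = \sum_(i <- r | P i) co (F i) a.
Proof.
exact: (big_morph (co^~ a) (fun x y => coD x y a) (co0 a)).
Qed.

Lemma co_e {R : realType} {n : nat} m a :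
  co (ebasis R n m) a = if (a < n)%N && (a.+1 == m) then 1 else 0.
Proof.
rewrite /co; case: insubP => [l Hl <-|Hl]; first by rewrite mxE ltn_ord.
by rewrite (negbTE Hl).
Qed.

Lemma shiftE {R : realType} {n : nat} k (w : vecn R n) a :
  co (mu0_mul (ebasis R n k) w) a =
  if [&& (0 < k)%N, (k <= a)%N & (a < n)%N] then co w (a - k) else 0.
Proof.
rewrite /mu0_mul co_sum.
under eq_bigr => i _.
  rewrite co_sum.
  under eq_bigr => j _ do rewrite coZ co_e mxE.
  over.
simpl.
case: k => [|k].
  by rewrite big1 // => i _; rewrite big1 // => j _; rewrite !mul0r.
have -> : \sum_(i < n) \sum_(j < n) ((if (i.+1 == k.+1)%N then 1 else 0) * w 0 j *
     (if (a < n)%N && (a.+1 == i.+1 + j.+1)%N then 1 else 0)) =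
   \sum_(i < n) (if val i == k then \sum_(j < n) (if val j == (a - k.+1)%N then
       (if (k.+1 <= a)%N && (a < n)%N then w 0 j else 0) else 0) else 0).
  apply: eq_bigr => i _; rewrite eqSS; case: eqP => Hi; last first.
    by rewrite big1 // => j _; rewrite !mul0r.
  apply: eq_bigr => j _; rewrite mul1r.
  case: (eqVneq (val j) (a - k.+1)%N) => Hj.
    case: ifP => H1.
      rewrite ifT ?mulr1 //; case/andP: H1 => ? ?; apply/andP; split => //.
      apply/eqP; simpl in *; lia.
    rewrite ifF ?mulr0 //; apply/negbTE/negP => /andP [H2 /eqP H3].
    move/negbT: H1; rewrite negb_and => /orP [] /negP; apply; simpl in *; lia.
  rewrite ifF ?mulr0 //; apply/negbTE/negP => /andP [H2 /eqP H3].
  move/eqP: Hj; apply; simpl in *; lia.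
rewrite sum_ord_dirac.
case: (insubP 'I_n k) => [i Hi Hv|Hi].
  rewrite sum_ord_dirac /co.
  case: (insubP 'I_n (a - k.+1)%N) => [j Hj Hv'|Hj] //.
  by case: ifP.
rewrite ifF //; apply/negbTE/negP => /and3P [H1 H2 H3]; move/negP: Hi; apply; lia.
Qed.

Lemma mulE {R : realType} {n : nat} k m : (0 < k)%N -> (0 < m)%N ->
  mu0_mul (ebasis R n k) (ebasis R n m) = ebasis R n (k + m).
Proof.
move=> Hk Hm; apply: co_ext => a; rewrite shiftE !co_e Hk /=.
case: (leqP k a) => Ha /=.
  case: (ltnP a n) => Han //=.
  by congr (if _ then _ else _); apply/idP/idP; lia.
case: (ltnP a n) => Han //=.
by rewrite ifF //; apply/negbTE/negP; lia.
Qed.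

Lemma assocE {R : realType} {n : nat} k m (w : vecn R n) : (0 < k)%N -> (0 < m)%N ->
  mu0_mul (ebasis R n k) (mu0_mul (ebasis R n m) w) = mu0_mul (ebasis R n (k + m)) w.
Proof.
move=> Hk Hm; apply: co_ext => a; rewrite !shiftE Hk Hm addn_gt0 Hk /=.
case: (leqP k a) => Ha /=; last first.
  by rewrite ifF //; apply/negbTE/negP => /andP [H1 H2]; lia.
case: (ltnP a n) => Han /=; last by rewrite !andbF.
rewrite andbT subnDA; congr (if _ then _ else _); apply/idP/idP; lia.
Qed.

Lemma mul_scale {R : realType} {n : nat} (x w : vecn R n) (c : CC R) :
  mu0_mul x (c *: w) = c *: mu0_mul x w.
Proof.
rewrite /mu0_mul scaler_sumr; apply: eq_bigr => i _.
rewrite scaler_sumr; apply: eq_bigr => j _.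
by rewrite mxE scalerA mulrCA.
Qed.

Lemma ebasis_out {R : realType} {n : nat} k : (n < k)%N -> ebasis R n k = 0.
Proof.
move=> H; apply: co_ext => a; rewrite co_e co0; case: ifP => // /andP [H1 /eqP H2]; lia.
Qed.

Definition cf {R : realType} (i j : nat) : CC R := ((j%:Z - i%:Z)%:~R).

Lemma cfE {R : realType} i j : cf i j = j%:R - i%:R :> CC R.
Proof. by rewrite /cf rmorphB. Qed.

Definition T {R : realType} {n : nat} (v : vecn R n) (m : nat) : vecn R n :=
  if m is 0 then v else mu0_mul (ebasis R n m) v.

Lemma T_shift {R : realType} {n : nat} (v : vecn R n) k m : (0 < k)%N ->
  mu0_mul (ebasis R n k) (T v m) = T v (m + k).
Proof.
move=> Hk; case: m => [|m] /=; first by rewrite add0n; case: k Hk.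
rewrite assocE // addnC addSn //.
Qed.

Lemma coT {R : realType} {n : nat} (v : vecn R n) m a :
  co (T v m) a = if (m <= a)%N && (a < n)%N then co v (a - m) else 0.
Proof.
case: m => [|m] /=.
  by rewrite subn0; case: ltnP => // H; rewrite co_out.
by rewrite shiftE.
Qed.

Definition f {R : realType} {n : nat} (v : vecn R n) i j := cf i j *: T v (i + j - 3).

Lemma f_rec {R : realType} {n : nat} (v : vecn R n) i j k :
  (0 < i)%N -> (0 < j)%N -> (0 < k)%N ->
  f v (i + k) j + f v i (j + k) = 2%:R *: mu0_mul (ebasis R n k) (f v i j).
Proof.
move=> Hi Hj Hk; rewrite /f mul_scale T_shift // scalerA.
have -> : (i + k + j - 3 = i + (j + k) - 3)%N by lia.
rewrite -scalerDl.
case: (leqP 3 (i + j)) => H.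
  have -> : (i + (j + k) - 3 = i + j - 3 + k)%N by lia.
  by congr (_ *: _); rewrite !cfE !natrD; ring.
have [-> ->] : i = 1%N /\ j = 1%N by lia.
rewrite !cfE subrr mulr0 scale0r.
have -> : ((1%:R : CC R) - (1 + k)%:R + ((1 + k)%:R - 1%:R)) = 0 by ring.
by rewrite scale0r.
Qed.


Lemma br_facts {R : realType} {n : nat} (br : vecn R n -> vecn R n -> vecn R n) :
  is_TPA_bracket br ->
  (forall z, br 0 z = 0) /\ (forall x y, br y x = - br x y).
Proof.
case=> H1 H2 H3 _ _.
have Hz : forall z, br 0 z = 0.
  move=> z; have := H1 1 0 0 z; rewrite !scale1r addr0 => E.
  by apply: (addrI (br 0 z)); rewrite addr0 -E.
split => // x y.
have := H3 (x + y).
have D1 : forall a b c, br (a + b) c = br a c + br b c.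
  by move=> a b c; have := H1 1 a b c; rewrite !scale1r.
have D2 : forall a b c, br c (a + b) = br c a + br c b.
  by move=> a b c; have := H2 1 a b c; rewrite !scale1r.
rewrite D1 !D2 !H3 add0r addr0 => /eqP; rewrite addr_eq0 => /eqP ->; by rewrite opprK.
Qed.

Lemma TP_rec {R : realType} {n : nat} (br : vecn R n -> vecn R n -> vecn R n) i j k :
  is_TPA_bracket br -> (0 < i)%N -> (0 < j)%N -> (0 < k)%N ->
  br (ebasis R n (i + k)) (ebasis R n j) + br (ebasis R n i) (ebasis R n (j + k)) =
  2%:R *: mu0_mul (ebasis R n k) (br (ebasis R n i) (ebasis R n j)).
Proof.
case=> _ _ _ _ H5 Hi Hj Hk.
by rewrite H5 !mulE // ![(k + _)%N]addnC.
Qed.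

Lemma three_zero {V : zmodType} (u u1 u2 : V) :
  u = - u1 -> u = - u2 -> u1 = - u2 -> u + u = 0.
Proof. by move=> E1 E2 E3; rewrite {1}E1 E3 opprK E2 addrN. Qed.

Lemma claim {R : realType} {n : nat} (br : vecn R n -> vecn R n -> vecn R n) :
  is_TPA_bracket br ->
  forall N p q, (0 < p)%N -> (0 < q)%N -> (p + q = N)%N ->
  br (ebasis R n p) (ebasis R n q) = f (br (ebasis R n 1) (ebasis R n 2)) p q.
Proof.
move=> H; have [Hz Ha] := br_facts br H.
have H3 : forall x, br x x = 0 by case: H.
set v := br (ebasis R n 1) (ebasis R n 2).
elim/ltn_ind => N IH p q Hp Hq HN.
case: (ltnP N 4) => HN4.
  have [[-> ->]|[[-> ->]|[-> ->]]] :
    (p = 1 /\ q = 1 \/ p = 1 /\ q = 2 \/ p = 2 /\ q = 1)%N by lia.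
  - by rewrite H3 /f cfE subrr scale0r.
  - by rewrite /f cfE /= -natrB // scale1r.
  - by rewrite Ha /f cfE /= -opprB -natrB // scaleN1r.
pose x (a : nat) : vecn R n := br (ebasis R n a) (ebasis R n (N - a)) - f v a (N - a).
have pair : forall a a', (0 < a')%N -> (a' < a)%N -> (a < N)%N -> x a + x a' = 0.
  move=> a a' H1 H2 H4.
  have H5 : (0 < N - a)%N by lia.
  have H6 : (0 < a - a')%N by lia.
  have := TP_rec br a' (N - a)%N (a - a')%N H H1 H5 H6.
  have E1 : (a' + (a - a') = a)%N by lia.
  have E2 : (N - a + (a - a') = N - a')%N by lia.
  rewrite E1 E2 (IH (a' + (N - a))%N _ a' (N - a)%N) //; try lia.
  have := f_rec v a' (N - a)%N (a - a')%N H1 H5 H6.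
  rewrite E1 E2.
  move=> F Hb; rewrite /x addrACA -opprD Hb -F ?subrr //; lia.
have pairS : forall a a', (0 < a < N)%N -> (0 < a' < N)%N -> a != a' -> x a = - x a'.
  move=> a a' /andP [H1 H2] /andP [H1' H2'] Hne.
  apply/eqP; rewrite -addr_eq0.
  case: (ltngtP a a') => Hlt.
  - by rewrite addrC pair.
  - by rewrite pair.
  - by move: Hne; rewrite Hlt eqxx.
have key : forall a, (0 < a < N)%N -> x a = 0.
  move=> a Ha0.
  have [a1 [a2 [K1 [K2 [K3 [K4 K5]]]]]] : exists a1 a2, (0 < a1 < N)%N /\ (0 < a2 < N)%N /\
     a1 != a /\ a2 != a /\ a1 != a2.
    case: (eqVneq a 1) => E1; first by exists 2%N, 3%N; subst; repeat split => //; lia.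
    case: (eqVneq a 2) => E2; first by exists 1%N, 3%N; subst; repeat split => //; lia.
    exists 1%N, 2%N; repeat split => //; try lia; by rewrite eq_sym.
  have E : x a + x a = 0.
    have N1 : a != a1 by rewrite eq_sym.
    have N2 : a != a2 by rewrite eq_sym.
    have P1 := pairS a a1 Ha0 K1 N1.
    have P2 := pairS a a2 Ha0 K2 N2.
    have P3 := pairS a1 a2 K1 K2 K5.
    exact: (@three_zero 'rV[CC R]_n _ _ _ P1 P2 P3).
  have : (2%:R : CC R) *: x a = 0 by rewrite scaler_nat mulr2n.
  by move/eqP; rewrite scaler_eq0 pnatr_eq0 /= => /eqP.
have := key p; rewrite /x.
have -> : q = (N - p)%N by lia.
move=> K; apply/eqP; rewrite -subr_eq0; apply/eqP; apply: K; lia.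
Qed.

Theorem mainTheorem1 (R : realType) (n : nat) (hn : (2 <= n)%N)
    (br : vecn R n -> vecn R n -> vecn R n) :
  is_TPA_bracket br ->
  exists alpha : nat -> CC R,
    forall i j : nat, (1 <= i <= n)%N -> (1 <= j <= n)%N ->
      br (ebasis R n i) (ebasis R n j) =
      if (3 <= i + j <= n.+1)%N then
        ((j%:Z - i%:Z)%:~R : CC R) *:
          \sum_((i + j).-1 <= t < n.+1) (alpha (t + 3 - (i + j))%N *: ebasis R n t)
      else 0.
Proof.
move=> H.
have [Hz Ha] := br_facts br H.
have H3 : forall x, br x x = 0 by case: H.
have Cl := claim br H.
set v := br (ebasis R n 1) (ebasis R n 2) in Cl.
have v0 : co v 0 = 0.
  have := Cl n.+2 n.+1 1%N erefl erefl (addn1 _).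
  rewrite ebasis_out // Hz /f => /(congr1 (co^~ (n.-1))).
  rewrite co0 coZ coT.
  have -> : (n.+1 + 1 - 3 = n.-1)%N by lia.
  rewrite leqnn /= ltn_predL (leq_trans _ hn) // subnn.
  move/esym/eqP; rewrite mulf_eq0 cfE => /orP [|/eqP //].
  rewrite subr_eq0 eqr_nat => /eqP; lia.
exists (fun s => co v s.-1) => i j Hi Hj.
case: (leqP 3 (i + j)) => Hij; last first.
  have [-> ->] : i = 1%N /\ j = 1%N by lia.
  by rewrite H3.
rewrite (Cl (i + j)%N) //; try lia.
rewrite /f /cf.
case: ifP => Hc.
  congr (_ *: _); apply: co_ext => a; rewrite coT co_sum.
  rewrite (eq_bigr (fun t => if t == a.+1 then
      (if (a < n)%N then co v (t + 3 - (i + j)).-1 else 0) else 0)); last first.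
    move=> t _; rewrite coZ co_e.
    case: (eqVneq t a.+1) => [->|Ht]; first by rewrite andbT; case: ifP; rewrite ?mulr1 ?mulr0.
    by rewrite andbF mulr0.
  rewrite sum_nat_dirac.
  case: (ltnP a n) => Han; last first.
    by rewrite andbF; case: ifP.
  rewrite andbT ltnS Han andbT.
  case: (eqVneq a (i + j - 3)%N) => Ea.
    rewrite Ea leqnn subnn v0 ifF //; apply/negP; lia.
  have -> : ((i + j).-1 <= a.+1)%N = (i + j - 3 <= a)%N by apply/idP/idP; lia.
  case: ifP => // Hc'; congr (co v _); lia.
apply: co_ext => a; rewrite coZ coT co0.
case: ifP => [/andP [h1 h2]|]; last by rewrite mulr0.
have -> : (a - (i + j - 3) = 0)%N by move/negbT: Hc; lia.
by rewrite v0 mulr0.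
Qed.
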